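(* Let $n\ge 2$ and let $g\ge0$ be an integer with $\gcd(n,g)=1$. Let $(H_{k,m})_{m\ge0}$ be a generalized $k$-Horadam sequence with $H_{k,1}\ne0$, and put $M=g(k)(H_{k,n}-H_{k,0})$, $N=H_{k,1}-H_{k,n+1}$, and assume $M\neq 0$. Then $$\det C_{n,g}(H)=\det Q_g\cdot\left[H_{k,1}N^{n-1}+H_{k,1}M^{n-2}\sum_{i=1}^{n-1}\left(-\frac{H_{k,2}H_{k,i+1}}{H_{k,1}}+H_{k,i+2}\right)\left(\frac{N}{M}\right)^{i-1}\right].$$
   Context: Generalized $k$-Horadam sequence: $k>0$ is a real number, $f(k),g(k)$ are real numbers (values of fixed polynomials in $k$) with $f(k)^2+4g(k)>0$, and $a,b\in\mathbb{R}$; the sequence is defined by $H_{k,0}=a$, $H_{k,1}=b$, $H_{k,m+2}=f(k)H_{k,m+1}+g(k)H_{k,m}$ for $m\ge 0$. The real number $g(k)$ is unrelated to the integer shift parameter $g$. For $n\ge1$, an integer $g\ge 0$ and numbers $a_0,\dots,a_{n-1}$, the $g$-circulant matrix $g\text{-}circ(a_0,\dots,a_{n-1})$ is the $n\times n$ matrix whose $(i,j)$ entry ($0\le i,j\le n-1$) is $a_{(j-ig)\bmod n}$. $C_{n,g}(H):=g\text{-}circ(H_{k,1},\dots,H_{k,n})$. $Q_g:=g\text{-}circ(1,0,\dots,0)$, i.e. the $n\times n$ matrix whose $(i,j)$ entry is $1$ if $j\equiv ig \pmod n$ and $0$ otherwise. *)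

(* Defs.v *)
From HB Require Import structures.
From mathcomp Require Import all_boot all_order all_algebra.
Set Implicit Arguments. Unset Strict Implicit. Unset Printing Implicit Defensive.
Import Order.TTheory GRing.Theory Num.Theory.
Local Open Scope ring_scope.

Fixpoint horadam {R : pzRingType} (a b fk gk : R) (m : nat) : R :=
  match m with
  | 0 => a
  | 1 => b
  | S ((S m'') as m') => fk * horadam a b fk gk m' + gk * horadam a b fk gk m''
  end.

(* g-circulant matrix g-circ(a_0,...,a_{n-1}): entry (i,j) is a_{(j - i g) mod n}.
   (j - i*g) mod n is computed as (j + (n - (i*g mod n))) mod n. *)
Definition gcirc {R : pzRingType} (n g : nat) (a : nat -> R) : 'M[R]_n :=
  \matrix_(i < n, j < n) a ((j + (n - (i * g) %% n)) %% n)%N.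

Definition Cng {R : pzRingType} (n g : nat) (H : nat -> R) : 'M[R]_n :=
  gcirc n g (fun t => H t.+1).

Definition Qg {R : pzRingType} (n g : nat) : 'M[R]_n :=
  gcirc n g (fun t => if t == 0%N then 1 else 0).

(* Main.v *)
Require Import Defs.
From HB Require Import structures.
From mathcomp Require Import all_boot all_order all_algebra.
From mathcomp Require Import zify ring.
Import Order.TTheory GRing.Theory Num.Theory.
Local Open Scope ring_scope.

Lemma modidx n i j : (i < n)%N -> (j < n)%N ->
  ((j + (n - i)) %% n = if (i <= j)%N then j - i else j + n - i)%N.
Proof. move=> hi hj; case: leqP => h.
  have ->: (j + (n - i) = (j - i) + n)%N by lia.
  by rewrite modnDr modn_small //; lia.
by rewrite modn_small; lia.
Qed.

Lemma modidx0 n l r : (l < n)%N -> (r < n)%N -> ((l + (n - r)) %% n == 0)%N = (l == r).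
Proof. move=> hl hr. rewrite modidx //. case: leqP => h; apply/eqP/eqP; lia. Qed.

Lemma sum_delta (R : pzRingType) n (F : nat -> R) k : (k < n)%N ->
  \sum_(l < n) ((l:nat) == k)%:R * F l = F k.
Proof.
move=> hk; rewrite (bigD1 (Ordinal hk)) //= eqxx mul1r big1 ?addr0 // => i ne.
have -> : ((i:nat) == k) = false.
  by apply/negbTE; apply: contra ne => /eqP e; apply/eqP/val_inj.
by rewrite mul0r.
Qed.

Lemma Qg_mul (R : pzRingType) n g (c : nat -> R) : (0 < n)%N ->
  Qg n g *m gcirc n 1 c = gcirc n g c.
Proof.
move=> n0; apply/matrixP => i j; rewrite !mxE.
have hr : ((i * g) %% n < n)%N by rewrite ltn_mod.
rewrite (bigD1 (Ordinal hr)) //= big1 ?addr0.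
  by rewrite !mxE /= modidx0 // eqxx mul1r muln1 modn_mod.
move=> l ne; rewrite !mxE modidx0 //.
have -> : ((l:nat) == (i * g) %% n)%N = false.
  by apply/negbTE; apply: contra ne => /eqP e; apply/eqP/val_inj.
by rewrite mul0r.
Qed.

Lemma Cent (R : pzRingType) (c : nat -> R) m (i j : 'I_m.+2) :
  gcirc m.+2 1 c i j = c (if (i <= j)%N then j - i else j + m.+2 - i)%N.
Proof. by rewrite mxE muln1 (modn_small (ltn_ord i)) modidx. Qed.

Definition Lmx {R : pzRingType} (fk gk : R) m : 'M[R]_m.+2 :=
  \matrix_(i, j) if (i < m)%N then ((j:nat) == i)%:R - fk * ((j:nat) == i.+1)%:R
                  - gk * ((j:nat) == i.+2)%:R else ((j:nat) == i)%:R.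

Lemma det_Lmx (R : comPzRingType) (fk gk : R) m : \det (Lmx fk gk m) = 1.
Proof.
rewrite -det_tr det_trig.
  apply: big1 => i _; rewrite !mxE eqxx; case: ifP => // _.
  by rewrite (ltn_eqF (ltnSn i)) (ltn_eqF (leqW (ltnSn i))) !mulr0 !subr0.
apply/is_trig_mxP => i j lij; rewrite !mxE.
have -> : ((i:nat) == j) = false by apply/negbTE; rewrite neq_ltn lij.
have -> : ((i:nat) == j.+1) = false by apply/negbTE; rewrite neq_ltn; lia.
have -> : ((i:nat) == j.+2) = false by apply/negbTE; rewrite neq_ltn; lia.
by rewrite !mulr0 !subr0; case: ifP.
Qed.

Lemma D_entry (R : comPzRingType) (fk gk : R) (H : nat -> R)
  (hrec : forall t, H t.+2 = fk * H t.+1 + gk * H t) m (i j : 'I_m.+2) :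
  (Lmx fk gk m *m gcirc m.+2 1 (fun t => H t.+1)) i j =
  if (i < m)%N then (H 1%N - H m.+3) * ((j:nat) == i)%:R
                    - gk * (H m.+2 - H 0%N) * ((j:nat) == i.+1)%:R
  else gcirc m.+2 1 (fun t => H t.+1) i j.
Proof.
rewrite mxE; case: ifP => him.
  under eq_bigr => l _ do rewrite mxE him Cent mulrBl mulrBl -!mulrA.
  rewrite !sumrB -!mulr_sumr.
  pose F := fun l : nat => H (if (l <= j)%N then (j - l)%N else (j + m.+2 - l)%N).+1.
  rewrite (@sum_delta _ _ F i) ?(@sum_delta _ _ F i.+1) ?(@sum_delta _ _ F i.+2) /F; try lia.
  have hj := ltn_ord j.
  case: (ltngtP j i) => [ji | ij | ->].
  - idtac.
    have -> : ((j:nat) == i.+1) = false by apply/negbTE; rewrite neq_ltn; lia.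
    rewrite !ifF; try lia.
    have -> : (j + m.+2 - i = (j + m - i).+2)%N by lia.
    have -> : (j + m.+2 - i.+1 = (j + m - i).+1)%N by lia.
    have -> : (j + m.+2 - i.+2 = (j + m - i))%N by lia.
    rewrite hrec. rewrite !mulr0. ring.
  - idtac.
    case: (ltngtP j i.+1) => [jl | jg | je]; first lia.
    + idtac.
      have -> : (j - i = (j - i.+2).+2)%N by lia.
      have -> : (j - i.+1 = (j - i.+2).+1)%N by lia.
      rewrite hrec !mulr0; ring.
    + have -> : (j - i = 1)%N by lia.
      have -> : (j - i.+1 = 0)%N by lia.
      have -> : (j + m.+2 - i.+2 = m.+1)%N by lia.
      rewrite /= (hrec 0%N); ring.
  - have -> : ((i:nat) == i.+1) = false by apply/negbTE; rewrite neq_ltn ltnSn.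
    rewrite subnn ifF; last lia.
    have -> : (i + m.+2 - i.+1 = m.+1)%N by lia.
    have -> : (i + m.+2 - i.+2 = m)%N by lia.
    rewrite /= (hrec m.+1); ring.
under eq_bigr => l _ do rewrite mxE him Cent.
by rewrite Cent (@sum_delta _ _ (fun l : nat => H (if (l <= j)%N then (j - l)%N else (j + m.+2 - l)%N).+1) i).
Qed.

Lemma sum_delta_r (R : pzRingType) n (G : 'I_n -> R) (k : 'I_n) :
  \sum_(l < n) G l * ((l:nat) == k)%:R = G k.
Proof.
rewrite (bigD1 k) //= eqxx mulr1 big1 ?addr0 // => i ne.
have -> : ((i:nat) == k) = false.
  by apply/negbTE; apply: contra ne => /eqP e; apply/eqP/val_inj.
by rewrite mulr0.
Qed.

Definition Xmx {R : pzRingType} (s : R) m : 'M[R]_m.+2 :=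
  \matrix_(i, j) if (j:nat) == 0%N then (if (i < m.+1)%N then s ^+ i else 0)
                 else ((i:nat) == j)%:R.

Lemma det_Xmx (R : comPzRingType) (s : R) m : \det (Xmx s m) = 1.
Proof.
rewrite det_trig.
  apply: big1 => i _; rewrite !mxE eqxx; case: eqP => // i0.
  by rewrite i0 expr0.
apply/is_trig_mxP => i j lij; rewrite !mxE.
have -> : ((j:nat) == 0%N) = false by apply/negbTE; rewrite -lt0n; lia.
by have -> : ((i:nat) == j) = false by apply/negbTE; rewrite neq_ltn lij.
Qed.

Lemma E_entry (R : comPzRingType) (fk gk : R) (H : nat -> R)
  (hrec : forall t, H t.+2 = fk * H t.+1 + gk * H t) m s (i j : 'I_m.+2) :
  (Lmx fk gk m *m gcirc m.+2 1 (fun t => H t.+1) *m Xmx s m) i j =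
  if (j:nat) == 0%N then
    (if (i < m)%N then (H 1%N - H m.+3) * s ^+ i - gk * (H m.+2 - H 0%N) * s ^+ i.+1
     else \sum_(l < m.+1) H (if (i <= l)%N then l - i else l + m.+2 - i)%N.+1 * s ^+ l)
  else
    (if (i < m)%N then (H 1%N - H m.+3) * ((j:nat) == i)%:R
                    - gk * (H m.+2 - H 0%N) * ((j:nat) == i.+1)%:R
     else H (if (i <= j)%N then j - i else j + m.+2 - i)%N.+1).
Proof.
rewrite mxE; under eq_bigr => l _ do rewrite (@D_entry _ _ _ _ hrec) [Xmx s m l j]mxE.
case: eqP => j0.
  case: ifP => him.
    under eq_bigr => l _ do rewrite mulrBl -!mulrA.
    rewrite sumrB -!mulr_sumr.
    pose F := fun l : nat => if (l < m.+1)%N then s ^+ l else 0.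
    rewrite (@sum_delta _ _ F i) ?(@sum_delta _ _ F i.+1) /F ?ifT ?mulrA //; lia.
  under eq_bigr => l _ do rewrite Cent.
  rewrite big_ord_recr /= ltnn mulr0 addr0.
  by apply: eq_bigr => l _; rewrite /= ltn_ord.
rewrite sum_delta_r; case: ifP => // _; exact: Cent.
Qed.

Lemma circ_det (R : fieldType) (fk gk : R) (H : nat -> R)
  (hrec : forall t, H t.+2 = fk * H t.+1 + gk * H t) m :
  gk * (H m.+2 - H 0%N) != 0 ->
  \det (gcirc m.+2 1 (fun t => H t.+1)) =
  (gk * (H m.+2 - H 0%N)) ^+ m *
  (H 1%N * \sum_(l < m.+1) ((H 1%N - H m.+3) / (gk * (H m.+2 - H 0%N))) ^+ l
                  * (if (l < m)%N then H l.+3 else H 1%N)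
   - H 2%N * \sum_(l < m.+1) ((H 1%N - H m.+3) / (gk * (H m.+2 - H 0%N))) ^+ l
                  * H l.+2).
Proof.
move=> hM.
pose s := (H 1%N - H m.+3) / (gk * (H m.+2 - H 0%N)).
have hMs : gk * (H m.+2 - H 0%N) * s = H 1%N - H m.+3 by rewrite /s mulrC divfK.
rewrite -/s.
have <- : \det (Lmx fk gk m *m gcirc m.+2 1 (fun t => H t.+1) *m Xmx s m)
          = \det (gcirc m.+2 1 (fun t => H t.+1)).
  by rewrite !det_mulmx det_Lmx det_Xmx mul1r mulr1.
have EE := fun i j => @E_entry R fk gk H hrec m s i j.
rewrite (expand_det_col _ ord0) big_ord_recr big_ord_recr /= big1 ?add0r; last first.
  move=> i _; rewrite EE /= ltn_ord.
  by rewrite exprSr (mulrC (s ^+ i)) [gk * _ * (s * _)]mulrA hMs subrr mul0r.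
set E := Lmx fk gk m *m gcirc m.+2 1 (fun t => H t.+1) *m Xmx s m in EE *.
have neqF : forall x y : nat, x <> y -> (x == y) = false by move=> x y h; apply/negbTE/eqP.
have minor : forall i0 : 'I_m.+2, (m <= i0)%N ->
  \det (row' i0 (col' ord0 E)) =
    (- (gk * (H m.+2 - H 0%N))) ^+ m * (if (i0:nat) == m then H 1%N else H 2%N).
  move=> i0 hi0; rewrite det_trig.
    rewrite big_ord_recr /=.
    rewrite (eq_bigr (fun _ => - (gk * (H m.+2 - H 0%N)))); last first.
      move=> k _; rewrite 2!mxE EE lift0 /=.
      have -> : bump i0 k = k by rewrite /bump leqNgt (leq_trans (ltn_ord k) hi0).
      rewrite ltn_ord eqxx neqF; last lia.
      by rewrite mulr0 mulr1 sub0r.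
    rewrite prodr_const card_ord; congr (_ * _).
    rewrite 2!mxE EE lift0 /=.
    have [hm | hm] : (i0:nat) = m \/ (i0:nat) = m.+1 by have := ltn_ord i0; lia.
      rewrite /bump hm leqnn eqxx add1n ifF ?ifT ?subnn //; lia.
    rewrite /bump hm ltnn add0n ltnn leqnSn subSn // subnn neqF //; lia.
  apply/is_trig_mxP => k l hkl; rewrite 2!mxE EE lift0 /=.
  have hk : (k < m)%N by have := ltn_ord l; lia.
  have -> : bump i0 k = k by rewrite /bump leqNgt (leq_trans hk hi0).
  have h1 : (l.+1 == k) = false by apply/negbTE; rewrite neq_ltn (ltn_trans hkl (ltnSn _)) orbT.
  have h2 : (l.+1 == k.+1) = false by apply/negbTE; rewrite eqSS neq_ltn hkl orbT.
  by rewrite hk h1 h2 !mulr0 subr0.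
rewrite /cofactor !minor /= ?leqnn ?leqnSn // !EE /= ltnn eqxx ifF; last lia.
rewrite (neqF m.+1 m); last lia.
have hU : \sum_(l < m.+1) H (if (m <= l)%N then (l - m)%N else (l + m.+2 - m)%N).+1 * s ^+ l
   = \sum_(l < m.+1) s ^+ l * (if (l < m)%N then H l.+3 else H 1%N).
  apply: eq_bigr => l _; rewrite mulrC; case: leqP => hl.
    have hlm : (l:nat) = m by have := ltn_ord l; lia.
    by rewrite hlm subnn.
  by have -> : (l + m.+2 - m = l.+2)%N by lia.
have hV : \sum_(l < m.+1) H (if (m.+1 <= l)%N then (l - m.+1)%N else (l + m.+2 - m.+1)%N).+1 * s ^+ l
   = \sum_(l < m.+1) s ^+ l * H l.+2.
  apply: eq_bigr => l _; rewrite mulrC ifF; last by have := ltn_ord l; lia.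
  by have -> : (l + m.+2 - m.+1 = l.+1)%N by lia.
rewrite hU hV addn0 addn0 exprS.
have hsign : (-1) ^+ m * (- (gk * (H m.+2 - H 0%N))) ^+ m = (gk * (H m.+2 - H 0%N)) ^+ m.
  by rewrite -exprMn mulN1r opprK.
rewrite -hsign.
move: ((-1) ^+ m) ((- (gk * (H m.+2 - H 0%N))) ^+ m) => p q.
ring.
Qed.

Theorem theorem2 (R : realFieldType) (f g0 : {poly R}) (k a b : R) (n g : nat)
  (hk : 0 < k) (hdisc : 0 < f.[k] ^+ 2 + 4%:R * g0.[k])
  (hn : (2 <= n)%N) (hcop : coprime n g) :
  let H := horadam a b f.[k] g0.[k] in
  let M := g0.[k] * (H n - H 0%N) in
  let N := H 1%N - H n.+1 in
  H 1%N != 0 -> M != 0 ->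
  \det (Cng n g H) =
    \det (Qg (R := R) n g) *
    (H 1%N * N ^+ n.-1
     + H 1%N * M ^+ (n - 2)
       * \sum_(1 <= i < n) (- (H 2%N * H i.+1) / H 1%N + H i.+2) * (N / M) ^+ i.-1).
Proof.
case: n hn hcop => [|[|m]] // _ _ H M N hH1 hM.
have hrec : forall t, H t.+2 = f.[k] * H t.+1 + g0.[k] * H t by [].
rewrite /Cng -Qg_mul // det_mulmx; congr (_ * _).
rewrite (@circ_det _ _ _ _ hrec m hM) /=.
rewrite (_ : (m.+2 - 2 = m)%N); last lia.
rewrite big_add1 /= big_mkord.
rewrite -/M -/N.
rewrite [H 1%N * \sum_(l < m.+1) _]mulr_sumr [H 2%N * \sum_(l < m.+1) _]mulr_sumr -sumrB.
have hsum : \sum_(l < m.+1) (H 1%N * ((N / M) ^+ l * (if (l < m)%N then H l.+3 else H 1%N))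
      - H 2%N * ((N / M) ^+ l * H l.+2))
   = H 1%N * \sum_(l < m.+1) ((- (H 2%N * H l.+2) / H 1%N + H l.+3) * (N / M) ^+ l)
     + H 1%N * N * (N / M) ^+ m.
  rewrite mulr_sumr big_ord_recr [in RHS]big_ord_recr /= ltnn -addrA; congr (_ + _).
    apply: eq_bigr => l _; rewrite ltn_ord; field; exact: hH1.
  rewrite /N; field; exact: hH1.
have hMN : M ^+ m * (N / M) ^+ m = N ^+ m by rewrite -exprMn mulrC divfK.
have h2 : M ^+ m * (H 1%N * N * (N / M) ^+ m) = H 1%N * N ^+ m.+1.
  by rewrite exprSr -hMN; move: (M ^+ m) ((N / M) ^+ m) => p q; ring.
by rewrite hsum mulrDr h2 addrC mulrA (mulrC (M ^+ m)).
Qed.
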